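(* Let $Q>0$, $\alpha>0$, $\beta\ge1$, and let the inverse demand function be $p(q)=\alpha(Q-q)^{\beta}$ for $0\le q\le Q$ and $p(q)=0$ for $q>Q$. Suppose the cost functions satisfy Assumptions 1, 3 and 4, and that there is a best supplier $k$ whose cost function is linear, $C_k(x)=cx$ with $0<c<\alpha Q^\beta$, and satisfies $C_k'(x)\le C_m'(x)$ for every supplier $m$ and every $x>0$. Then every Cournot equilibrium $\mathbf{x}$ satisfies $$\gamma(\mathbf{x})\ge f\!\left(\Big(\frac{p(0)}{c}\Big)^{(\beta-1)/\beta}\right)\quad\text{and}\quad \gamma(\mathbf{x})\ge f\!\left(\Big(\frac{p(X)}{c}\Big)^{(\beta-1)/\beta}\right),$$ where $X=\sum_n x_n$.
   Context: Cournot model: $N$ suppliers, inverse demand $p$, supplier $n$ has cost $C_n:[0,\infty)\to[0,\infty)$ and chooses $x_n\ge0$; $X=\sum_n x_n$; payoff of $n$ is $x_np(X)-C_n(x_n)$. A Cournot equilibrium is a profile $\mathbf{x}\ge0$ such that no supplier can increase its payoff by unilaterally changing its quantity to any $x\ge0$. $C_n'(0)$ is the right derivative at $0$. Assumption 1: each $C_n$ is convex, continuous, nondecreasing on $[0,\infty)$, continuously differentiable on $(0,\infty)$, with $C_n(0)=0$. Assumption 3: there exists $R>0$ such that $p(R)\le\min_n C_n'(0)$. Assumption 4: $p(0)>\min_n C_n'(0)$. Social welfare of $\mathbf{x}\ge0$: $W(\mathbf{x})=\int_0^X p(q)\,dq-\sum_{n=1}^N C_n(x_n)$; a social optimum $\mathbf{x}^S$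 maximizes $W$. Efficiency: $\gamma(\mathbf{x})=W(\mathbf{x})/W(\mathbf{x}^S)$. For $\overline c\ge1$: $f(\overline c)=\dfrac{\phi^2+2}{\phi^2+2\phi+\overline c}$ with $\phi=\max\left\{\dfrac{2-\overline c+\sqrt{\overline c^{\,2}-4\overline c+12}}{2},1\right\}$. *)

(* Defs.v *)
From Stdlib Require Import Reals Lra List ClassicalEpsilon.
Open Scope R_scope.

(* Inverse demand p(q) = alpha (Q-q)^beta on [0,Q], 0 for q > Q.
   (For q < 0 it is the same formula; only q >= 0 is ever used.) *)
Definition pdem (alpha Q beta : R) (q : R) : R :=
  if Rlt_dec q Q then alpha * Rpower (Q - q) beta else 0.

Definition total (N : nat) (x : nat -> R) : R :=
  fold_right Rplus 0 (map x (seq 0 N)).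

Definition upd (x : nat -> R) (n : nat) (y : R) : nat -> R :=
  fun m => if Nat.eqb m n then y else x m.

Definition nonneg_profile (N : nat) (x : nat -> R) : Prop :=
  forall n, (n < N)%nat -> 0 <= x n.

Definition payoff (p : R -> R) (C : nat -> R -> R) (N : nat) (x : nat -> R) (n : nat) : R :=
  x n * p (total N x) - C n (x n).

Definition cournot_eq (p : R -> R) (C : nat -> R -> R) (N : nat) (x : nat -> R) : Prop :=
  nonneg_profile N x /\
  forall n, (n < N)%nat -> forall y, 0 <= y ->
    payoff p C N (upd x n y) n <= payoff p C N x n.

(* Riemann integral of f on [a,b] (value of RiemannInt; independent of the proof) *)
Definition integral (f : R -> R) (a b : R) : R :=
  epsilon (inhabits 0) (fun I => exists pr : Riemann_integrable f a b, RiemannInt pr = I).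

Definition welfare (p : R -> R) (C : nat -> R -> R) (N : nat) (x : nat -> R) : R :=
  integral p 0 (total N x) - fold_right Rplus 0 (map (fun n => C n (x n)) (seq 0 N)).

Definition social_optimum (p : R -> R) (C : nat -> R -> R) (N : nat) (xS : nat -> R) : Prop :=
  nonneg_profile N xS /\
  forall y, nonneg_profile N y -> welfare p C N y <= welfare p C N xS.

Definition right_deriv (f : R -> R) (x d : R) : Prop :=
  forall eps, 0 < eps -> exists delta, 0 < delta /\
    forall h, 0 < h < delta -> Rabs ((f (x + h) - f x) / h - d) < eps.

(* Assumption 1 for a cost function Cn, with dCn its derivative on (0,oo)
   and dCn 0 its right derivative at 0. *)
Definition assumption1 (Cn dCn : R -> R) : Prop :=
  (forall x y t, 0 <= x -> 0 <= y -> 0 <= t <= 1 ->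
     Cn (t * x + (1 - t) * y) <= t * Cn x + (1 - t) * Cn y) /\
  (forall x, 0 <= x -> forall eps, 0 < eps -> exists delta, 0 < delta /\
     forall y, 0 <= y -> Rabs (y - x) < delta -> Rabs (Cn y - Cn x) < eps) /\
  (forall x y, 0 <= x <= y -> Cn x <= Cn y) /\
  (forall x, 0 < x -> derivable_pt_lim Cn x (dCn x)) /\
  (forall x, 0 < x -> continuity_pt dCn x) /\
  right_deriv Cn 0 (dCn 0) /\
  Cn 0 = 0.

Definition phi_of (cb : R) : R :=
  Rmax ((2 - cb + sqrt (cb ^ 2 - 4 * cb + 12)) / 2) 1.

Definition fbound (cb : R) : R :=
  let ph := phi_of cb in (ph ^ 2 + 2) / (ph ^ 2 + 2 * ph + cb).

(* Main.v *)
Require Import Defs.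
From Stdlib Require Import Reals Lra Lia List ClassicalEpsilon.
From Coquelicot Require Import Coquelicot.
Open Scope R_scope.

Lemma Rpower_one_base y : Rpower 1 y = 1.
Proof. unfold Rpower. rewrite ln_1, Rmult_0_r. apply exp_0. Qed.

Lemma Rpower_pos x y : 0 < Rpower x y.
Proof. unfold Rpower. apply exp_pos. Qed.

Lemma Rpower_S x b : 0 < x -> Rpower x (b + 1) = Rpower x b * x.
Proof. intros. rewrite Rpower_plus, Rpower_1; auto. Qed.

Lemma Rpower_m1 x b : 0 < x -> Rpower x b = Rpower x (b - 1) * x.
Proof. intros. rewrite <- Rpower_S; auto. f_equal; ring. Qed.

Lemma Rpower_mul x y b : 0 < x -> 0 < y -> Rpower (x*y) b = Rpower x b * Rpower y b.
Proof. intros. rewrite Rpower_mult_distr; auto. Qed.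

Lemma Rpower_le1 t b : 0 <= b -> 0 < t <= 1 -> Rpower t b <= 1.
Proof. intros. rewrite <- (Rpower_one_base b). apply Rle_Rpower_l; lra. Qed.

Lemma Rpower_ge1 t b : 0 <= b -> 1 <= t -> 1 <= Rpower t b.
Proof. intros. rewrite <- (Rpower_O t) by lra. apply Rle_Rpower; lra. Qed.

Lemma is_derive_Rpower x g : 0 < x -> is_derive (fun s => Rpower s g) x (g * Rpower x (g - 1)).
Proof. intros. apply is_derive_Reals. apply derivable_pt_lim_power; auto. Qed.

Lemma mono (f f' : R -> R) a b : a <= b ->
  (forall c, a <= c <= b -> is_derive f c (f' c)) ->
  (forall c, a < c < b -> 0 <= f' c) -> f a <= f b.
Proof.
  intros Hab Hd Hp. destruct (Req_dec a b) as [->|Hne]; [lra|].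
  destruct (MVT_cor2 f f' a b) as [c [Hc1 Hc2]]; [lra| |].
  - intros c Hc. apply is_derive_Reals. auto.
  - specialize (Hp c Hc2). nra.
Qed.

Lemma bern g r : 1 <= g -> 0 < r -> Rpower r g >= 1 + g * (r - 1).
Proof.
  intros Hg Hr.
  assert (Hd : forall c, 0 < c -> is_derive (fun s => Rpower s g - g * s) c (g * Rpower c (g-1) - g)).
  { intros c Hc. apply (is_derive_minus (fun s => Rpower s g) (fun s => g * s)).
    - apply is_derive_Rpower; auto.
    - auto_derive; auto; ring. }
  destruct (Rle_lt_dec 1 r).
  - assert (H := mono (fun s => Rpower s g - g * s) (fun c => g * Rpower c (g-1) - g) 1 r r0).
    simpl in H. rewrite Rpower_one_base in H.
    enough (1 - g * 1 <= Rpower r g - g * r) by lra. apply H.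
    + intros c Hc. apply Hd. lra.
    + intros c Hc. assert (1 <= Rpower c (g-1)) by (apply Rpower_ge1; lra). nra.
  - assert (H := mono (fun s => - (Rpower s g - g * s)) (fun c => - (g * Rpower c (g-1) - g)) r 1).
    simpl in H. rewrite Rpower_one_base in H.
    enough (- (Rpower r g - g * r) <= - (1 - g * 1)) by lra. apply H; [lra| |].
    + intros c Hc. apply (is_derive_opp (fun s => Rpower s g - g * s)). apply Hd. lra.
    + intros c Hc. assert (Rpower c (g-1) <= 1) by (apply Rpower_le1; lra). nra.
Qed.

Lemma tangent g t u : 1 <= g -> 0 < t -> 0 < u ->
  Rpower t g >= Rpower u g + g * Rpower u (g - 1) * (t - u).
Proof.
  intros Hg Ht Hu.
  assert (Hr : 0 < t / u) by (apply Rdiv_lt_0_compat; auto).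
  pose proof (bern g (t/u) Hg Hr) as B.
  replace t with (t / u * u) at 1 by (field; lra).
  rewrite Rpower_mul by auto.
  rewrite (Rpower_m1 u g) by auto.
  pose proof (Rpower_pos u (g-1)) as Hp.
  replace (t - u) with ((t/u - 1) * u) by (field; lra).
  set (A := Rpower u (g-1)) in *. set (r := t/u) in *. set (P := Rpower r g) in *.
  assert (0 < A * u) by nra.
  apply Rle_ge. apply Rge_le in B.
  replace (A * u + g * A * ((r - 1) * u)) with ((1 + g * (r - 1)) * (A * u)) by ring.
  replace (P * (A * u)) with (P * (A*u)) by ring.
  apply Rmult_le_compat_r; lra.
Qed.
Lemma exp_ln_R x y : exp (y * ln x) = Rpower x y.
Proof. reflexivity. Qed.

Lemma int_lb b u Q0 : 1 <= b -> 0 < u <= Q0 ->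
  Rpower Q0 (b+1)/(b+1) - Rpower u (b+1)/(b+1) >=
  (Q0 - u) * Rpower u b + b * Rpower u (b-1) * (Q0-u)^2/2.
Proof.
  intros Hb Hu.
  set (f := fun s => Rpower s (b+1)/(b+1) - (s - u) * Rpower u b - b * Rpower u (b-1) * (s-u)^2/2).
  assert (H := mono f (fun s => Rpower s b - Rpower u b - b * Rpower u (b-1) * (s-u)) u Q0 (proj2 Hu)).
  unfold f in H. replace (u - u) with 0 in H by ring.
  apply Rle_ge.
  enough (Rpower u (b + 1) / (b + 1) - 0 * Rpower u b - b * Rpower u (b - 1) * 0 ^ 2 / 2 <=
     Rpower Q0 (b + 1) / (b + 1) - (Q0 - u) * Rpower u b - b * Rpower u (b - 1) * (Q0 - u) ^ 2 / 2) by lra.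
  apply H.
  - intros c Hc. unfold Rpower. auto_derive. lra. rewrite !exp_ln_R.
    rewrite (Rpower_S c b) by lra. field. split; lra.
  - intros c Hc. pose proof (tangent b c u Hb ltac:(lra) ltac:(lra)). lra.
Qed.

Lemma chord b v u : 1 <= b -> 0 < v <= u ->
  (Rpower u (b+1) - Rpower v (b+1))/(b+1) - Rpower v b * (u - v) <=
  (u - v) * (Rpower u b - Rpower v b) / 2.
Proof.
  intros Hb Hv.
  set (f := fun s => (s - v) * (Rpower s b - Rpower v b) / 2 - Rpower s (b+1)/(b+1) + Rpower v b * s).
  assert (H := mono f (fun s => (Rpower v b - Rpower s b + b * Rpower s (b-1) * (s - v))/2) v u (proj2 Hv)).
  unfold f in H.
  enough ((v - v) * (Rpower v b - Rpower v b) / 2 - Rpower v (b + 1) / (b + 1) + Rpower v b * v <=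
     (u - v) * (Rpower u b - Rpower v b) / 2 - Rpower u (b + 1) / (b + 1) + Rpower v b * u).
  { unfold Rdiv in *. lra. }
  apply H.
  - intros c Hc. unfold Rpower. auto_derive. lra. rewrite !exp_ln_R.
    rewrite (Rpower_S c b) by lra. rewrite (Rpower_m1 c b) by lra. field. split; lra.
  - intros c Hc. pose proof (tangent b v c Hb ltac:(lra) ltac:(lra)). lra.
Qed.

Section Dem.
Variables (alpha Q beta : R).
Hypotheses (Ha : 0 < alpha) (HQ : 0 < Q) (Hb : 1 <= beta).

Definition pd (q : R) : R := if Rlt_dec q Q then alpha * Rpower (Q - q) beta else 0.

Definition Gd (q : R) : R := if Rlt_dec q Q then - (alpha/(beta+1)) * Rpower (Q - q) (beta+1) else 0.

Lemma Rpower_small t : 0 < t <= 1 -> Rpower t beta <= t.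
Proof.
  intros Ht. rewrite (Rpower_m1 t beta) by lra.
  pose proof (Rpower_le1 t (beta-1) ltac:(lra) Ht). nra.
Qed.

Lemma loc_lt x : x < Q -> locally x (fun t => t < Q).
Proof. intros. apply (open_lt Q x H). Qed.
Lemma loc_gt x : Q < x -> locally x (fun t => Q < t).
Proof. intros. apply (open_gt Q x H). Qed.

Lemma Gd_deriv q : is_derive Gd q (pd q).
Proof.
  destruct (Rtotal_order q Q) as [Hq|[Hq|Hq]].
  - apply (is_derive_ext_loc (fun q => - (alpha/(beta+1)) * Rpower (Q - q) (beta+1))).
    + apply (filter_imp (fun t => t < Q)); [|apply loc_lt; auto].
      intros t Ht. unfold Gd. destruct (Rlt_dec t Q); [auto|lra].
    + unfold pd. destruct (Rlt_dec q Q); [|lra].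
      unfold Rpower. auto_derive. lra. rewrite !exp_ln_R.
      replace (Q + - q) with (Q - q) by ring.
      rewrite (Rpower_S (Q - q) beta) by lra. field. split; lra.
  - subst q. apply is_derive_Reals. intros eps Heps.
    assert (Hd : 0 < Rmin 1 (eps * (beta+1) / alpha)).
    { apply Rmin_pos; [lra|]. apply Rdiv_lt_0_compat; nra. }
    exists (mkposreal _ Hd). intros h Hh Hlt. simpl in Hlt.
    assert (Hlt1 : Rabs h < 1) by (eapply Rlt_le_trans; [apply Hlt|apply Rmin_l]).
    assert (Hlt2 : Rabs h < eps * (beta+1) / alpha) by (eapply Rlt_le_trans; [apply Hlt|apply Rmin_r]).
    unfold Gd, pd. destruct (Rlt_dec Q Q); [lra|].
    destruct (Rlt_dec (Q + h) Q) as [Hh1|Hh1].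
    + replace (Q - (Q + h)) with (-h) by ring.
      rewrite Rabs_left in Hlt1, Hlt2 by lra.
      rewrite Rpower_S by lra.
      pose proof (Rpower_small (-h) ltac:(lra)).
      pose proof (Rpower_pos (-h) beta).
      replace ((- (alpha / (beta + 1)) * (Rpower (- h) beta * - h) - 0) / h - 0)
        with ((alpha / (beta + 1)) * Rpower (- h) beta) by (field; lra).
      rewrite Rabs_right.
      2:{ apply Rle_ge. apply Rmult_le_pos; [|lra]. apply Rlt_le, Rdiv_lt_0_compat; lra. }
      apply (Rle_lt_trans _ ((alpha / (beta + 1)) * (-h))).
      * apply Rmult_le_compat_l; [apply Rlt_le, Rdiv_lt_0_compat; lra | lra].
      * apply (Rmult_lt_reg_r ((beta+1)/alpha)). apply Rdiv_lt_0_compat; lra.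
        replace (alpha / (beta + 1) * - h * ((beta + 1) / alpha)) with (-h) by (field; lra).
        replace (eps * ((beta + 1) / alpha)) with (eps * (beta + 1) / alpha) by (field; lra). lra.
    + replace ((0 - 0) / h - 0) with 0 by (field; auto). rewrite Rabs_R0. auto.
  - apply (is_derive_ext_loc (fun _ => 0)).
    + apply (filter_imp (fun t => Q < t)); [|apply loc_gt; auto].
      intros t Ht. unfold Gd. destruct (Rlt_dec t Q); [lra|auto].
    + unfold pd. destruct (Rlt_dec q Q); [lra|]. apply (is_derive_const 0).
Qed.

Lemma pd_cont q : continuous pd q.
Proof.
  destruct (Rtotal_order q Q) as [Hq|[Hq|Hq]].
  - apply (continuous_ext_loc _ (fun q => alpha * Rpower (Q - q) beta)).
    + apply (filter_imp (fun t => t < Q)); [|apply loc_lt; auto].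
      intros t Ht. unfold pd. destruct (Rlt_dec t Q); [auto|lra].
    + apply (ex_derive_continuous (fun q0 : R => alpha * Rpower (Q - q0) beta)).
      unfold Rpower. auto_derive. lra.
  - subst q. apply continuity_pt_filterlim. apply continuity_pt_locally.
    intros eps.
    assert (Hd : 0 < Rmin 1 (eps / alpha)).
    { apply Rmin_pos; [lra|]. apply Rdiv_lt_0_compat; [apply cond_pos|lra]. }
    exists (mkposreal _ Hd). intros y Hy. simpl in Hy.
    unfold ball in Hy; simpl in Hy; unfold AbsRing_ball, minus, plus, opp in Hy; simpl in Hy.
    assert (Hlt1 : Rabs (y + - Q) < 1) by (eapply Rlt_le_trans; [apply Hy|apply Rmin_l]).
    assert (Hlt2 : Rabs (y + - Q) < eps / alpha) by (eapply Rlt_le_trans; [apply Hy|apply Rmin_r]).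
    pose proof (cond_pos eps).
    unfold pd. destruct (Rlt_dec Q Q); [lra|]. destruct (Rlt_dec y Q).
    + rewrite Rabs_left in Hlt1, Hlt2 by lra.
      pose proof (Rpower_small (Q - y) ltac:(lra)). pose proof (Rpower_pos (Q-y) beta).
      rewrite Rminus_0_r, Rabs_right by (apply Rle_ge; nra).
      apply (Rle_lt_trans _ (alpha * (Q - y))). nra.
      apply (Rmult_lt_reg_r (/alpha)). apply Rinv_0_lt_compat; lra.
      replace (alpha * (Q - y) * / alpha) with (Q - y) by (field; lra). unfold Rdiv in Hlt2. lra.
    + rewrite Rminus_0_r, Rabs_R0. auto.
  - apply (continuous_ext_loc _ (fun _ => 0)).
    + apply (filter_imp (fun t => Q < t)); [|apply loc_gt; auto].
      intros t Ht. unfold pd. destruct (Rlt_dec t Q); [lra|auto].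
    + apply continuous_const.
Qed.

Lemma pd_RInt Y : is_RInt pd 0 Y (Gd Y - Gd 0).
Proof.
  apply (is_RInt_derive Gd pd).
  - intros; apply Gd_deriv.
  - intros; apply pd_cont.
Qed.

End Dem.

Lemma integral_is f a b v : is_RInt f a b v -> integral f a b = v.
Proof.
  intros H.
  assert (pr : Riemann_integrable f a b) by (apply ex_RInt_Reals_0; exists v; auto).
  unfold integral.
  assert (Hex : exists I, exists pr : Riemann_integrable f a b, RiemannInt pr = I) by (exists (RiemannInt pr); exists pr; auto).
  destruct (epsilon_spec (inhabits 0) _ Hex) as [pr' Hpr'].
  rewrite <- Hpr', <- RInt_Reals. apply is_RInt_unique. auto.
Qed.

Definition sm (N : nat) (f : nat -> R) : R := fold_right Rplus 0 (map f (seq 0 N)).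

Lemma sm_S N f : sm (S N) f = sm N f + f N.
Proof.
  unfold sm. rewrite seq_S, map_app, fold_right_app. simpl.
  induction (map f (seq 0 N)); simpl; [ring|rewrite IHl; ring].
Qed.

Lemma sm_0 f : sm 0 f = 0.
Proof. reflexivity. Qed.

Lemma sm_le N f g : (forall n, (n < N)%nat -> f n <= g n) -> sm N f <= sm N g.
Proof.
  induction N; intros H. rewrite !sm_0; lra.
  rewrite !sm_S. assert (f N <= g N) by (apply H; lia).
  assert (sm N f <= sm N g) by (apply IHN; intros; apply H; lia). lra.
Qed.

Lemma sm_ext N f g : (forall n, (n < N)%nat -> f n = g n) -> sm N f = sm N g.
Proof. intros H. apply Rle_antisym; apply sm_le; intros n Hn; rewrite H; auto; lra. Qed.

Lemma sm_plus N f g : sm N (fun n => f n + g n) = sm N f + sm N g.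
Proof. induction N. rewrite !sm_0; ring. rewrite !sm_S, IHN; ring. Qed.

Lemma sm_scal N c f : sm N (fun n => c * f n) = c * sm N f.
Proof. induction N. rewrite !sm_0; ring. rewrite !sm_S, IHN; ring. Qed.

Lemma sm_ind N k v : (k < N)%nat -> sm N (fun n => if Nat.eqb n k then v else 0) = v.
Proof.
  induction N; intros Hk. lia. rewrite sm_S.
  destruct (Nat.eq_dec k N) as [->|Hne].
  - rewrite Nat.eqb_refl.
    rewrite (sm_ext N _ (fun _ => 0 * 0)).
    + rewrite sm_scal. ring.
    + intros n Hn. destruct (Nat.eqb_spec n N); [lia|ring].
  - rewrite IHN by lia. destruct (Nat.eqb_spec N k); [lia|ring].
Qed.

Lemma sm_single N f k : (k < N)%nat -> (forall n, (n < N)%nat -> 0 <= f n) -> f k <= sm N f.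
Proof.
  intros Hk H. rewrite <- (sm_ind N k (f k) Hk). apply sm_le.
  intros n Hn. destruct (Nat.eqb_spec n k); [subst; lra|auto].
Qed.

Lemma total_sm N x : total N x = sm N x.
Proof. reflexivity. Qed.

Lemma total_upd N x n y : (n < N)%nat -> total N (upd x n y) = total N x - x n + y.
Proof.
  intros Hn. rewrite !total_sm.
  rewrite (sm_ext N _ (fun m => x m + (if Nat.eqb m n then y - x n else 0))).
  - rewrite sm_plus. rewrite sm_ind by auto. change (total N x) with (sm N x). ring.
  - intros m Hm. unfold upd. destruct (Nat.eqb_spec m n); [subst; ring|ring].
Qed.

Lemma upd_eq x n y : upd x n y n = y.
Proof. unfold upd. rewrite Nat.eqb_refl. auto. Qed.

Definition convx (f : R -> R) : Prop := forall x y t, 0 <= x -> 0 <= y -> 0 <= t <= 1 ->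
     f (t * x + (1 - t) * y) <= t * f x + (1 - t) * f y.

Lemma lim_le A B K r : 0 < r -> 0 <= K -> (forall d, 0 < d < r -> A <= B + K * d) -> A <= B.
Proof.
  intros Hr HK H. destruct (Rle_lt_dec A B) as [|Hlt]; auto.
  set (d := Rmin (r/2) ((A - B) / (2 * (K + 1)))).
  assert (Hd1 : d <= r/2) by apply Rmin_l.
  assert (Hd2 : d <= (A - B) / (2 * (K + 1))) by apply Rmin_r.
  assert (Hd0 : 0 < d). { apply Rmin_pos; [lra|]. apply Rdiv_lt_0_compat; lra. }
  specialize (H d ltac:(lra)).
  assert (K * d <= (A - B) / 2).
  { apply (Rle_trans _ (K * ((A - B) / (2 * (K + 1))))). apply Rmult_le_compat_l; lra.
    apply (Rmult_le_reg_r (2 * (K+1))). lra.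
    replace (K * ((A - B) / (2 * (K + 1))) * (2 * (K + 1))) with (K * (A - B)) by (field; lra).
    nra. }
  lra.
Qed.

Lemma supp f z d y : convx f -> 0 < z -> 0 <= y -> derivable_pt_lim f z d -> f z + d * (y - z) <= f y.
Proof.
  intros Hc Hz Hy Hd.
  destruct (Rle_lt_dec (f z + d * (y - z)) (f y)) as [|Hlt]; auto. exfalso.
  destruct (Req_dec y z) as [->|Hyz]. lra.
  set (e := f z + d * (y - z) - f y).
  set (m := Rabs (y - z)).
  assert (Hm : 0 < m) by (apply Rabs_pos_lt; lra).
  destruct (Hd (e / m) ltac:(apply Rdiv_lt_0_compat; unfold e; lra)) as [del Hdel].
  pose proof (cond_pos del) as Hdp.
  set (t := Rmin 1 (del / (2 * m))).
  assert (Ht1 : t <= 1) by apply Rmin_l.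
  assert (Ht2 : t <= del / (2 * m)) by apply Rmin_r.
  assert (Ht0 : 0 < t) by (apply Rmin_pos; [lra|apply Rdiv_lt_0_compat; lra]).
  set (h := t * (y - z)).
  assert (Hh0 : h <> 0) by (unfold h; intro; apply Rmult_integral in H; lra).
  assert (Hhabs : Rabs h = t * m) by (unfold h, m; rewrite Rabs_mult, Rabs_right by lra; auto).
  assert (Hhd : Rabs h < del).
  { rewrite Hhabs. apply (Rle_lt_trans _ (del / (2*m) * m)). apply Rmult_le_compat_r; lra.
    replace (del / (2 * m) * m) with (del / 2) by (field; lra). lra. }
  specialize (Hdel h Hh0 Hhd).
  specialize (Hc y z t Hy ltac:(lra) ltac:(lra)).
  replace (t * y + (1 - t) * z) with (z + h) in Hc by (unfold h; ring).
  set (qd := (f (z + h) - f z) / h) in *.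
  assert (Hq : f (z + h) - f z = qd * h) by (unfold qd; field; auto).
  assert (H1 : qd * (y - z) <= f y - f z).
  { apply (Rmult_le_reg_l t). lra. replace (t * (qd * (y - z))) with (qd * h) by (unfold h; ring). lra. }
  assert (H2 : Rabs ((qd - d) * (y - z)) < e).
  { rewrite Rabs_mult. fold m. apply (Rlt_le_trans _ (e / m * m)).
    apply Rmult_lt_compat_r; auto. right; field; lra. }
  apply Rabs_def2 in H2. unfold e in H2. lra.
Qed.

Lemma lin_deriv (f : R -> R) c z d : convx f -> (forall x, 0 <= x -> f x = c * x) -> 0 < z ->
  derivable_pt_lim f z d -> d = c.
Proof.
  intros Hc Hf Hz Hd.
  pose proof (supp f z d 0 Hc Hz ltac:(lra) Hd) as H1.
  pose proof (supp f z d (2*z) Hc Hz ltac:(lra) Hd) as H2.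
  rewrite !Hf in H1, H2 by lra. nra.
Qed.

Lemma cost_lb (Cn dCn : R -> R) c : convx Cn -> Cn 0 = 0 -> (forall x y, 0 <= x <= y -> Cn x <= Cn y) ->
  (forall z, 0 < z -> derivable_pt_lim Cn z (dCn z)) -> (forall z, 0 < z -> c <= dCn z) -> 0 <= c ->
  forall y, 0 <= y -> c * y <= Cn y.
Proof.
  intros Hc H0 Hm Hd Hdc Hc0 y Hy.
  destruct (Req_dec y 0) as [->|Hy0]. rewrite H0; lra.
  apply (lim_le _ _ c y); [lra|lra|].
  intros d Hdd. pose proof (supp Cn d (dCn d) y Hc ltac:(lra) Hy (Hd d ltac:(lra))).
  pose proof (Hm 0 d ltac:(lra)). pose proof (Hdc d ltac:(lra)). nra.
Qed.

Lemma down (Cn : R -> R) xn P a : convx Cn -> Cn 0 = 0 -> 0 < xn -> 0 <= a ->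
  (forall y, 0 <= y < xn -> y * (P + a * (xn - y)) - Cn y <= xn * P - Cn xn) ->
  Cn xn <= xn * (P - a * xn).
Proof.
  intros Hc H0 Hx Ha H.
  apply (lim_le _ _ (xn * a) xn); [lra|nra|].
  intros d Hd. set (y := xn - d).
  specialize (H y ltac:(unfold y; lra)).
  set (t := y / xn).
  assert (Ht : 0 <= t <= 1). { unfold t, y. split. apply Rdiv_le_0_compat; lra.
    apply (Rmult_le_reg_r xn); auto. unfold Rdiv. rewrite Rmult_assoc, Rinv_l by lra. lra. }
  specialize (Hc xn 0 t ltac:(lra) ltac:(lra) Ht).
  replace (t * xn + (1 - t) * 0) with y in Hc by (unfold t; field; lra).
  rewrite H0 in Hc.
  assert (H1 : (1 - t) * Cn xn <= d * (P - a * y)).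
  { replace (xn - y) with d in H by (unfold y; ring). unfold y in *. nra. }
  replace (1 - t) with (d / xn) in H1 by (unfold t, y; field; lra).
  assert (H2 : Cn xn <= xn * (P - a * y)).
  { apply (Rmult_le_reg_l (d / xn)). apply Rdiv_lt_0_compat; lra.
    replace (d / xn * (xn * (P - a * y))) with (d * (P - a * y)) by (field; lra). lra. }
  unfold y in H2. nra.
Qed.

Lemma up_k xk P a c r : 0 < r -> 0 <= a ->
  (forall d, 0 < d < r -> (xk + d) * (P - a * d) - c * (xk + d) <= xk * P - c * xk) ->
  P - c <= a * xk.
Proof.
  intros Hr Ha H. apply (lim_le _ _ a r); auto.
  intros d Hd. specialize (H d Hd).
  apply (Rmult_le_reg_l d). lra. nra.
Qed.

Lemma fkey cb T : 0 < cb -> 1 <= T ->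
  (phi_of cb ^ 2 + 2) * (T^2 + 2*T + cb) <= (T^2 + 2) * (phi_of cb ^ 2 + 2 * phi_of cb + cb).
Proof.
  intros Hcb HT.
  assert (Hs2 : sqrt (cb ^ 2 - 4 * cb + 12) ^ 2 = cb ^ 2 - 4 * cb + 12).
  { rewrite <- Rsqr_pow2. apply Rsqr_sqrt. nra. }
  pose proof (sqrt_pos (cb ^ 2 - 4 * cb + 12)) as Hs0.
  set (s := sqrt (cb ^ 2 - 4 * cb + 12)) in *.
  unfold phi_of. fold s. unfold Rmax. destruct (Rle_dec ((2 - cb + s) / 2) 1) as [Hr|Hr].
  - assert (cb >= 3) by nra.
    replace ((T ^ 2 + 2) * (1 ^ 2 + 2 * 1 + cb) - (1 ^ 2 + 2) * (T ^ 2 + 2 * T + cb))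
      with ((T - 1) * (cb * T + cb - 6)) by ring.
    enough (0 <= (T - 1) * (cb * T + cb - 6)) by nra.
    apply Rmult_le_pos; nra.
  - set (p := (2 - cb + s) / 2) in *.
    assert (Hrho : p ^ 2 + (cb - 2) * p - 2 = 0).
    { replace (p ^ 2 + (cb - 2) * p - 2) with ((s^2 - (2-cb)^2 - 8)/4) by (unfold p; field).
      rewrite Hs2. field. }
    assert (E : (T ^ 2 + 2) * (p ^ 2 + 2 * p + cb) - (p ^ 2 + 2) * (T ^ 2 + 2 * T + cb)
             = (2 * p + cb - 2) * (T - p) ^ 2 + 2 * (p ^ 2 + (cb - 2) * p - 2) * (T - p)) by ring.
    rewrite Hrho in E.
    apply Rnot_le_lt in Hr.
    assert (0 <= (2 * p + cb - 2) * (T - p) ^ 2) by (apply Rmult_le_pos; [lra|apply pow2_ge_0]).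
    lra.
Qed.

Lemma phi_ge1 cb : 1 <= phi_of cb.
Proof. unfold phi_of. apply Rmax_r. Qed.

Lemma final a D X xk cb : 0 < a -> 0 < D -> D <= a * xk -> xk <= X -> 0 < cb ->
  fbound cb * (D * X + a * X ^ 2 / 2 + cb * D ^ 2 / (2 * a)) <= a * X ^ 2 / 2 + a * xk ^ 2.
Proof.
  intros Ha HD Hk HX Hcb.
  set (T := a * X / D).
  assert (HT : 1 <= T).
  { unfold T. apply (Rmult_le_reg_r D); auto. unfold Rdiv. rewrite Rmult_assoc, Rinv_l by lra. nra. }
  assert (HX' : X = T * D / a) by (unfold T; field; lra).
  assert (Hxk : D ^ 2 / a <= a * xk ^ 2).
  { apply (Rmult_le_reg_r a); auto. replace (D ^ 2 / a * a) with (D^2) by (field; lra). nra. }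
  pose proof (phi_ge1 cb) as Hp.
  pose proof (fkey cb T Hcb HT) as K.
  set (p := phi_of cb) in *.
  unfold fbound. fold p.
  assert (Hden : 0 < p ^ 2 + 2 * p + cb) by nra.
  assert (E1 : D * X + a * X ^ 2 / 2 + cb * D ^ 2 / (2 * a) = D^2/(2*a) * (T^2 + 2*T + cb))
    by (rewrite HX'; field; lra).
  assert (E2 : a * X ^ 2 / 2 + D ^ 2 / a = D^2/(2*a) * (T^2 + 2)) by (rewrite HX'; field; lra).
  rewrite E1. apply (Rle_trans _ (a * X ^ 2 / 2 + D ^ 2 / a)); [|lra]. rewrite E2.
  assert (Hc : 0 < D ^ 2 / (2 * a)) by (apply Rdiv_lt_0_compat; nra).
  replace ((p ^ 2 + 2) / (p ^ 2 + 2 * p + cb) * (D ^ 2 / (2 * a) * (T ^ 2 + 2 * T + cb)))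
    with (D ^ 2 / (2 * a) * ((p ^ 2 + 2) * (T ^ 2 + 2 * T + cb) / (p ^ 2 + 2 * p + cb))) by (field; lra).
  apply Rmult_le_compat_l; [lra|].
  apply (Rmult_le_reg_r (p ^ 2 + 2 * p + cb)); auto.
  replace ((p ^ 2 + 2) * (T ^ 2 + 2 * T + cb) / (p ^ 2 + 2 * p + cb) * (p ^ 2 + 2 * p + cb))
    with ((p ^ 2 + 2) * (T ^ 2 + 2 * T + cb)) by (field; lra).
  lra.
Qed.

Lemma concl W WS J S K a D X xk cb : 0 < a -> 0 < D -> D <= a * xk -> xk <= X -> 0 < cb ->
  W = J - S -> D * X + a * X ^ 2 / 2 <= J -> S <= D * X - a * xk ^ 2 ->
  WS <= J + K -> K <= cb * D ^ 2 / (2 * a) -> W <= WS ->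
  W / WS >= fbound cb.
Proof.
  intros Ha HD Hk HX Hcb HW HJ HS HWS HK HWW.
  pose proof (final a D X xk cb Ha HD Hk HX Hcb) as F.
  pose proof (phi_ge1 cb) as Hp.
  assert (Hfb0 : 0 <= fbound cb).
  { unfold fbound. apply Rlt_le, Rdiv_lt_0_compat; nra. }
  assert (Hfb1 : fbound cb <= 1).
  { unfold fbound. apply (Rmult_le_reg_r (phi_of cb ^ 2 + 2 * phi_of cb + cb)). nra.
    unfold Rdiv. rewrite Rmult_assoc, Rinv_l by nra. lra. }
  assert (Hxk : 0 < xk) by (destruct (Rle_lt_dec xk 0); [nra|auto]).
  assert (0 < a * xk ^ 2) by (apply Rmult_lt_0_compat; [lra|apply pow_lt; lra]).
  assert (0 <= a * X ^ 2) by (apply Rmult_le_pos; [lra|apply pow2_ge_0]).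
  assert (HWp : 0 < W) by lra.
  assert (HWSp : 0 < WS) by lra.
  assert (Hmain : fbound cb * WS <= W).
  { apply (Rle_trans _ (fbound cb * (J + cb * D ^ 2 / (2 * a)))).
    - apply Rmult_le_compat_l; lra.
    - set (J0 := D * X + a * X ^ 2 / 2) in *. set (K0 := cb * D ^ 2 / (2 * a)) in *.
      set (fb := fbound cb) in *.
      assert (E : J - S - fb * (J + K0) = (1 - fb) * (J - J0) + (J0 - S - fb * (J0 + K0))) by ring.
      assert (0 <= (1 - fb) * (J - J0)) by (apply Rmult_le_pos; lra).
      unfold J0 in *. lra. }
  apply Rle_ge. apply (Rmult_le_reg_r WS); auto.
  unfold Rdiv. rewrite Rmult_assoc, Rinv_l by lra. lra.
Qed.

Lemma sm_nonneg N f : (forall n, (n < N)%nat -> 0 <= f n) -> 0 <= sm N f.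
Proof.
  induction N; intros H. rewrite sm_0; lra.
  rewrite sm_S. assert (0 <= f N) by (apply H; lia).
  assert (0 <= sm N f) by (apply IHN; intros; apply H; lia). lra.
Qed.

Lemma sm_nonpos N f : (forall n, (n < N)%nat -> f n <= 0) -> sm N f <= 0.
Proof.
  intros H. assert (0 <= sm N (fun n => - f n)) by (apply sm_nonneg; intros n Hn; specialize (H n Hn); lra).
  rewrite (sm_ext N _ (fun n => (-1) * f n)) in H0 by (intros; ring). rewrite sm_scal in H0. lra.
Qed.

Theorem mainTheorem16
  (Q alpha beta : R) (HQ : 0 < Q) (Halpha : 0 < alpha) (Hbeta : 1 <= beta)
  (N : nat) (C dC : nat -> R -> R)
  (HA1 : forall n, (n < N)%nat -> assumption1 (C n) (dC n))
  (HA3 : exists R0, 0 < R0 /\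
           forall n, (n < N)%nat -> pdem alpha Q beta R0 <= dC n 0)
  (HA4 : exists n, (n < N)%nat /\ pdem alpha Q beta 0 > dC n 0)
  (k : nat) (Hk : (k < N)%nat) (c : R)
  (HCk : forall x, 0 <= x -> C k x = c * x)
  (Hc : 0 < c < alpha * Rpower Q beta)
  (Hbest : forall m, (m < N)%nat -> forall x, 0 < x -> dC k x <= dC m x)
  (x xS : nat -> R)
  (Heq : cournot_eq (pdem alpha Q beta) C N x)
  (HS : social_optimum (pdem alpha Q beta) C N xS) :
  let gamma := welfare (pdem alpha Q beta) C N x / welfare (pdem alpha Q beta) C N xS in
  gamma >= fbound (Rpower (pdem alpha Q beta 0 / c) ((beta - 1) / beta)) /\
  gamma >= fbound (Rpower (pdem alpha Q beta (total N x) / c) ((beta - 1) / beta)).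
Proof.
  intros gamma. unfold gamma. clear gamma HA3 HA4.
  destruct Heq as [Hnn Hdev]. destruct HS as [HSnn HSopt].
  set (p := pdem alpha Q beta) in *.
  assert (Hconv : forall n, (n < N)%nat -> convx (C n))
    by (intros n Hn; destruct (HA1 n Hn) as [H1 _]; exact H1).
  assert (HC0 : forall n, (n < N)%nat -> C n 0 = 0)
    by (intros n Hn; destruct (HA1 n Hn) as [_ [_ [_ [_ [_ [_ H1]]]]]]; exact H1).
  assert (Hmon : forall n, (n < N)%nat -> forall x y, 0 <= x <= y -> C n x <= C n y)
    by (intros n Hn; destruct (HA1 n Hn) as [_ [_ [H1 _]]]; exact H1).
  assert (Hder : forall n, (n < N)%nat -> forall z, 0 < z -> derivable_pt_lim (C n) z (dC n z))
    by (intros n Hn; destruct (HA1 n Hn) as [_ [_ [_ [H1 _]]]]; exact H1).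
  assert (Hdk : forall z, 0 < z -> dC k z = c).
  { intros z Hz. apply (lin_deriv (C k) c z); auto. }
  assert (Hclb : forall n, (n < N)%nat -> forall y, 0 <= y -> c * y <= C n y).
  { intros n Hn. apply (cost_lb (C n) (dC n)); auto; try lra.
    intros z Hz. rewrite <- (Hdk z Hz). auto. }
  set (X := total N x).
  assert (HX0 : 0 <= X) by (apply sm_nonneg; auto).
  assert (Hdv : forall n, (n < N)%nat -> forall y, 0 <= y ->
     y * p (X - x n + y) - C n y <= x n * p X - C n (x n)).
  { intros n Hn y Hy. specialize (Hdev n Hn y Hy). unfold payoff in Hdev.
    rewrite upd_eq, total_upd in Hdev by auto. exact Hdev. }
  assert (HXQ : X < Q).
  { destruct (Rlt_le_dec X Q) as [|HQX]; auto. exfalso.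
    assert (Hp0 : p X = 0) by (unfold p, pdem; destruct (Rlt_dec X Q); [lra|auto]).
    assert (X <= 0).
    { apply sm_nonpos. intros n Hn. specialize (Hdv n Hn 0 ltac:(lra)).
      rewrite Hp0, HC0 in Hdv by auto. pose proof (Hclb n Hn (x n) (Hnn n Hn)). nra. }
    lra. }
  set (u := Q - X).
  assert (Hu : 0 < u) by (unfold u; lra).
  set (P := alpha * Rpower u beta).
  assert (HP : p X = P) by (unfold p, pdem, P, u; destruct (Rlt_dec X Q); [auto|lra]).
  set (a := alpha * beta * Rpower u (beta - 1)).
  assert (Ha : 0 < a) by (unfold a; pose proof (Rpower_pos u (beta-1)); apply Rmult_lt_0_compat; nra).
  assert (Hptan : forall q, q < Q -> P + a * (X - q) <= p q).
  { intros q Hq. unfold p, pdem. destruct (Rlt_dec q Q); [|lra].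
    pose proof (tangent beta (Q - q) u Hbeta ltac:(lra) Hu) as T.
    replace (Q - q - u) with (X - q) in T by (unfold u; ring).
    unfold P, a. nra. }
  assert (Hdown : forall n, (n < N)%nat -> C n (x n) <= x n * (P - a * x n)).
  { intros n Hn. pose proof (Hnn n Hn) as Hxn.
    destruct (Req_dec (x n) 0) as [Hz|Hz].
    - rewrite Hz, HC0 by auto. lra.
    - apply down; auto; [lra|lra|].
      intros y Hy. specialize (Hdv n Hn y (proj1 Hy)).
      pose proof (Hptan (X - x n + y) ltac:(lra)) as T.
      rewrite HP in Hdv.
      replace (X - (X - x n + y)) with (x n - y) in T by ring.
      assert (y * (P + a * (x n - y)) <= y * p (X - x n + y)) by (apply Rmult_le_compat_l; lra).
      lra. }
  assert (Hup : P - c <= a * x k).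
  { apply (up_k (x k) P a c u); auto; [lra|].
    intros d Hd. pose proof (Hnn k Hk) as Hxk.
    specialize (Hdv k Hk (x k + d) ltac:(lra)).
    rewrite !HCk in Hdv by lra. rewrite HP in Hdv.
    pose proof (Hptan (X - x k + (x k + d)) ltac:(unfold u in Hd; lra)) as T.
    replace (X - (X - x k + (x k + d))) with (- d) in T by ring.
    assert ((x k + d) * (P - a * d) <= (x k + d) * p (X - x k + (x k + d)))
      by (apply Rmult_le_compat_l; lra).
    lra. }
  assert (HD : 0 < P - c).
  { destruct (Rlt_le_dec 0 (P - c)) as [|HPc]; auto. exfalso.
    assert (X <= 0).
    { apply sm_nonpos. intros n Hn. pose proof (Hdown n Hn). pose proof (Hclb n Hn (x n) (Hnn n Hn)).
      pose proof (Hnn n Hn).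
      assert (x n * (P - c) <= 0) by (apply Rmult_le_0_l; lra).
      assert (a * (x n * x n) <= 0) by nra.
      assert (x n * x n <= 0) by (apply (Rmult_le_reg_l a); lra).
      nra. }
    assert (X = 0) by lra.
    assert (u = Q) by (unfold u; lra). unfold P in HPc. rewrite H1 in HPc. lra. }
  set (D := P - c) in *.
  set (SC := sm N (fun n => C n (x n))).
  assert (HSC : SC <= D * X - a * x k ^ 2 + c * X).
  { unfold SC.
    apply (Rle_trans _ (sm N (fun n => P * x n + (if Nat.eqb n k then - a * x k ^ 2 else 0)))).
    - apply sm_le. intros n Hn. pose proof (Hdown n Hn). pose proof (Hnn n Hn).
      destruct (Nat.eqb_spec n k) as [->|]; nra.
    - rewrite sm_plus, sm_scal, sm_ind by auto. change (sm N x) with X. unfold D. lra. }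
  assert (HxkX : x k <= X) by (apply sm_single; auto).
  assert (HI : forall Y, integral p 0 Y = Gd alpha Q beta Y - Gd alpha Q beta 0).
  { intros Y. apply integral_is. apply pd_RInt; auto. }
  assert (HG0 : Gd alpha Q beta 0 = - (alpha / (beta + 1)) * Rpower Q (beta + 1)).
  { unfold Gd. destruct (Rlt_dec 0 Q); [|lra]. rewrite Rminus_0_r. auto. }
  assert (HIX : integral p 0 X = alpha / (beta+1) * (Rpower Q (beta + 1) - Rpower u (beta+1))).
  { rewrite HI, HG0. unfold Gd. destruct (Rlt_dec X Q); [|lra]. fold u. ring. }
  assert (HE1 : D * X + a * X ^ 2 / 2 <= integral p 0 X - c * X).
  { rewrite HIX. pose proof (int_lb beta u Q Hbeta ltac:(unfold u; lra)) as L.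
    replace (Q - u) with X in L by (unfold u; ring).
    unfold D, P, a.
    assert (alpha * ((X * Rpower u beta + beta * Rpower u (beta - 1) * X ^ 2 / 2)) <=
            alpha * (Rpower Q (beta + 1) / (beta + 1) - Rpower u (beta + 1) / (beta + 1)))
      by (apply Rmult_le_compat_l; lra).
    replace (alpha / (beta + 1) * (Rpower Q (beta + 1) - Rpower u (beta + 1)))
      with (alpha * (Rpower Q (beta + 1) / (beta + 1) - Rpower u (beta + 1) / (beta + 1))) by (field; lra).
    lra. }
  set (v := Rpower (c / alpha) (/ beta)).
  assert (Hv : 0 < v) by apply Rpower_pos.
  assert (Hvb : Rpower v beta = c / alpha).
  { unfold v. rewrite Rpower_mult. replace (/ beta * beta) with 1 by (field; lra).
    apply Rpower_1. apply Rdiv_lt_0_compat; lra. }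
  assert (Hvu : v < u).
  { destruct (Rlt_le_dec v u) as [|Hle]; auto. exfalso.
    assert (Rpower u beta <= Rpower v beta) by (apply Rle_Rpower_l; lra).
    rewrite Hvb in H. unfold D, P in HD.
    assert (alpha * Rpower u beta <= alpha * (c / alpha)) by (apply Rmult_le_compat_l; lra).
    replace (alpha * (c / alpha)) with c in H0 by (field; lra). lra. }
  set (psi := fun w => alpha / (beta + 1) * Rpower w (beta + 1) - c * w).
  assert (Hpsiv : forall w, 0 < w -> psi v <= psi w).
  { intros w Hw. pose proof (tangent (beta+1) w v ltac:(lra) Hw Hv) as T.
    replace (beta + 1 - 1) with beta in T by ring. rewrite Hvb in T.
    unfold psi.
    assert (alpha / (beta+1) * (Rpower v (beta + 1) + (beta + 1) * (c / alpha) * (w - v))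
            <= alpha / (beta+1) * Rpower w (beta + 1))
      by (apply Rmult_le_compat_l; [apply Rlt_le, Rdiv_lt_0_compat; lra|lra]).
    replace (alpha / (beta+1) * (Rpower v (beta + 1) + (beta + 1) * (c / alpha) * (w - v)))
      with (alpha / (beta+1) * Rpower v (beta + 1) + c * (w - v)) in H by (field; lra).
    lra. }
  assert (Hpsiv0 : psi v <= 0).
  { unfold psi. rewrite Rpower_S, Hvb by lra.
    replace (alpha / (beta + 1) * (c / alpha * v) - c * v) with (- (c * v) * beta / (beta + 1)) by (field; lra).
    assert (0 <= c * v * beta / (beta + 1)) by (apply Rmult_le_pos; [apply Rmult_le_pos; [apply Rmult_le_pos|]; lra|apply Rlt_le, Rinv_0_lt_compat; lra]).
    lra. }
  set (b := alpha * beta * Rpower v (beta - 1)).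
  assert (Hb : 0 < b) by (unfold b; pose proof (Rpower_pos v (beta-1)); apply Rmult_lt_0_compat; nra).
  assert (Hpsiu : psi u - psi v <= D ^ 2 / (2 * b)).
  { pose proof (chord beta v u Hbeta ltac:(lra)) as Ch.
    pose proof (tangent beta u v Hbeta Hu Hv) as T.
    rewrite Hvb in Ch, T.
    assert (H1 : psi u - psi v <= (u - v) * D / 2).
    { unfold psi, D, P.
      assert (alpha * ((Rpower u (beta + 1) - Rpower v (beta + 1)) / (beta + 1) - c / alpha * (u - v))
         <= alpha * ((u - v) * (Rpower u beta - c / alpha) / 2)) by (apply Rmult_le_compat_l; lra).
      replace (alpha * ((Rpower u (beta + 1) - Rpower v (beta + 1)) / (beta + 1) - c / alpha * (u - v)))
        with (alpha / (beta + 1) * Rpower u (beta + 1) - c * u - (alpha / (beta + 1) * Rpower v (beta + 1) - c * v)) in H by (field; lra).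
      replace (alpha * ((u - v) * (Rpower u beta - c / alpha) / 2)) with ((u - v) * (alpha * Rpower u beta - c) / 2) in H by (field; lra).
      lra. }
    assert (H2 : b * (u - v) <= D).
    { unfold b, D, P.
      assert (alpha * (c / alpha + beta * Rpower v (beta - 1) * (u - v)) <= alpha * Rpower u beta)
        by (apply Rmult_le_compat_l; lra).
      replace (alpha * (c / alpha + beta * Rpower v (beta - 1) * (u - v)))
        with (c + alpha * beta * Rpower v (beta - 1) * (u - v)) in H by (field; lra). lra. }
    assert (H3 : u - v <= D / b).
    { apply (Rmult_le_reg_l b); auto. replace (b * (D / b)) with D by (field; lra). lra. }
    apply (Rle_trans _ _ _ H1).
    replace (D ^ 2 / (2 * b)) with ((D / b) * D / 2) by (field; lra).
    apply Rmult_le_compat_r; [lra|]. apply Rmult_le_compat_r; lra. }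
  set (cb2 := Rpower (u / v) (beta - 1)).
  assert (Hab : a = b * cb2).
  { unfold a, b, cb2. replace u with (v * (u / v)) at 1 by (field; lra).
    rewrite Rpower_mul by (try apply Rdiv_lt_0_compat; lra). ring. }
  assert (Hcb2 : 0 < cb2) by apply Rpower_pos.
  assert (Hsup : forall Y, 0 <= Y -> integral p 0 Y - c * Y <= integral p 0 X - c * X + cb2 * D ^ 2 / (2 * a)).
  { intros Y HY.
    replace (cb2 * D ^ 2 / (2 * a)) with (D ^ 2 / (2 * b)) by (rewrite Hab; field; lra).
    rewrite !HI, HG0. unfold Gd. destruct (Rlt_dec X Q); [|lra]. fold u.
    destruct (Rlt_dec Y Q) as [HYQ|HYQ].
    - pose proof (Hpsiv (Q - Y) ltac:(lra)). unfold psi in *.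
      replace X with (Q - u) by (unfold u; ring). lra.
    - unfold psi in *. replace X with (Q - u) by (unfold u; ring).
      assert (c * (Q - u) - c * Y <= - c * u) by nra. lra. }
  set (YS := total N xS).
  assert (HYS : 0 <= YS) by (apply sm_nonneg; auto).
  assert (HWS : welfare p C N xS <= integral p 0 X - c * X + cb2 * D ^ 2 / (2 * a)).
  { unfold welfare. fold YS.
    assert (c * YS <= fold_right Rplus 0 (map (fun n => C n (xS n)) (seq 0 N))).
    { change (fold_right Rplus 0 (map (fun n => C n (xS n)) (seq 0 N))) with (sm N (fun n => C n (xS n))).
      unfold YS. rewrite total_sm, <- sm_scal. apply sm_le. intros n Hn. apply Hclb; auto. }
    pose proof (Hsup YS HYS). lra. }
  assert (HWW : welfare p C N x <= welfare p C N xS) by (apply HSopt; auto).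
  assert (HWx : welfare p C N x = (integral p 0 X - c * X) - (SC - c * X)) by (unfold welfare; fold X; unfold SC, sm; ring).
  assert (HPc : P / c = Rpower (u / v) beta).
  { unfold P. replace u with (v * (u / v)) at 1 by (field; lra).
    rewrite Rpower_mul, Hvb by (try apply Rdiv_lt_0_compat; lra). field. lra. }
  assert (Ecb2 : Rpower (p X / c) ((beta - 1) / beta) = cb2).
  { rewrite HP, HPc, Rpower_mult. unfold cb2. f_equal. field. lra. }
  assert (Hp0 : p 0 = alpha * Rpower Q beta) by (unfold p, pdem; destruct (Rlt_dec 0 Q); [rewrite Rminus_0_r; auto|lra]).
  assert (Ecb1 : cb2 <= Rpower (p 0 / c) ((beta - 1) / beta)).
  { rewrite <- Ecb2. apply Rle_Rpower_l.
    - apply Rdiv_le_0_compat; lra.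
    - rewrite HP, Hp0. split. apply Rdiv_lt_0_compat; [|lra]. unfold P; pose proof (Rpower_pos u beta); nra.
      unfold Rdiv. apply Rmult_le_compat_r. apply Rlt_le, Rinv_0_lt_compat; lra.
      unfold P. apply Rmult_le_compat_l; [lra|]. apply Rle_Rpower_l; unfold u; lra. }
  split.
  - assert (0 < Rpower (p 0 / c) ((beta - 1) / beta)) by apply Rpower_pos.
    assert (cb2 * D ^ 2 / (2 * a) <= Rpower (p 0 / c) ((beta - 1) / beta) * D ^ 2 / (2 * a)).
    { unfold Rdiv. rewrite !Rmult_assoc. apply Rmult_le_compat_r; auto.
      apply Rlt_le, Rmult_lt_0_compat; [apply pow_lt; lra|apply Rinv_0_lt_compat; lra]. }
    apply (concl _ _ (integral p 0 X - c * X) (SC - c * X) (cb2 * D ^ 2 / (2 * a)) a D X (x k)); auto; lra.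
  - rewrite Ecb2.
    apply (concl _ _ (integral p 0 X - c * X) (SC - c * X) (cb2 * D ^ 2 / (2 * a)) a D X (x k)); auto; lra.
Qed.
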